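(* Let $n\ge 1$ and $d\ge 1$ be integers. Let $p:\mathbb{R}^3\to\mathbb{C}$ be a complex-valued homogeneous quadratic polynomial which is harmonic and horizontally conformal, i.e. $\tau(p)=0$ and $\kappa(p,p)=0$ on $\mathbb{R}^3$. Let $P_d,Q_d:\mathbb{C}^n\to\mathbb{C}$ be two linearly independent homogeneous polynomials in the complex variables $(z_1,\dots,z_n)$ (holomorphic, i.e. not involving $\bar z_k$) of the same degree $d$. Identify $\mathbb{R}^3\times\mathbb{C}^n$ with the Euclidean space $\mathbb{R}^{2n+3}$, and let $\mathcal Z(Q_d)=\{(x,z)\in\mathbb{R}^3\times\mathbb{C}^n : Q_d(z)=0\}$. Define $$\hat\Phi_d(x_1,x_2,x_3,z_1,\dots,z_n)=\frac{p(x_1,x_2,x_3)^{d/2}+P_d(z_1,\dots,z_n)}{Q_d(z_1,\dots,z_n)},$$ on $(\mathbb{R}^3\times\mathbb{C}^n)\setminus\mathcal Z(Q_d)$ if $d$ is even, and on $(\mathbb{R}^3\times\mathbb{C}^n)\setminus(\mathcal Z(Q_d)\cup\{(x,z): p(x)\in\mathbb{R},\ p(x)\le 0\})$ if $d$ is odd, where $p^{1/2}$ denotes the principal square root on $\mathbb{C}\setminus(-\infty,0]$. Then $\hat\Phi_d$ is a harmonic morphism on its domain.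
   Context: For complex-valued $C^2$ functions $\phi,\psi$ on $\mathbb{R}^3\times\mathbb{C}^n\cong\mathbb{R}^{2n+3}$ (Euclidean metric, $z_k=x_{2k+2}+i x_{2k+3}$), the tension field is $\tau(\phi)=\sum_{k=1}^3\partial^2\phi/\partial x_k^2+4\sum_{k=1}^n\partial^2\phi/\partial z_k\partial\bar z_k$ (the Laplacian) and the conformality operator is $\kappa(\phi,\psi)=\sum_{k=1}^3\frac{\partial\phi}{\partial x_k}\frac{\partial\psi}{\partial x_k}+2\sum_{k=1}^n\big(\frac{\partial\phi}{\partial z_k}\frac{\partial\psi}{\partial\bar z_k}+\frac{\partial\phi}{\partial\bar z_k}\frac{\partial\psi}{\partial z_k}\big)$, i.e. the complex-bilinear extension of the metric applied to the gradients. A map $\phi:(M,g)\to\mathbb{C}$ is a harmonic morphism if for every harmonic function $f$ on an open $U\subset\mathbb{C}$ with $\phi^{-1}(U)\neq\emptyset$, $f\circ\phi$ is harmonic on $\phi^{-1}(U)$; equivalently (Fuglede), $\tau(\phi)=0$ and $\kappa(\phi,\phi)=0$. *)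

(* Defs.v *)
From Stdlib Require Import Reals List.
From Coquelicot Require Import Coquelicot.
Open Scope R_scope.

(** Points of R^m are represented as [pt := nat -> R]; only coordinates
    0..m-1 are relevant (0-indexed: coordinate k is x_{k+1} of the paper). *)
Definition pt := nat -> R.

Definition upd (x : pt) (k : nat) (t : R) : pt :=
  fun j => if Nat.eqb j k then t else x j.

Definition near_m (m : nat) (x y : pt) (e : R) : Prop :=
  forall k, (k < m)%nat -> Rabs (y k - x k) < e.

Definition open_m (m : nat) (U : pt -> Prop) : Prop :=
  forall x, U x -> exists e, 0 < e /\ forall y, near_m m x y e -> U y.

Definition cont_at_m (m : nat) (g : pt -> R) (x : pt) : Prop :=
  forall eps, 0 < eps -> exists del, 0 < del /\
    forall y, near_m m x y del -> Rabs (g y - g x) < eps.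

Definition partial (k : nat) (g : pt -> R) : pt -> R :=
  fun x => Derive (fun t => g (upd x k t)) (x k).

Definition C2_on (m : nat) (U : pt -> Prop) (g : pt -> R) : Prop :=
  forall x, U x ->
    cont_at_m m g x /\
    forall j, (j < m)%nat ->
      ex_derive (fun t => g (upd x j t)) (x j) /\
      cont_at_m m (partial j g) x /\
      forall k, (k < m)%nat ->
        ex_derive (fun t => partial j g (upd x k t)) (x k) /\
        cont_at_m m (partial k (partial j g)) x.

Fixpoint rsum (m : nat) (f : nat -> R) : R :=
  match m with O => 0 | S m' => rsum m' f + f m' end.

Fixpoint csum (m : nat) (f : nat -> C) : C :=
  match m with O => RtoC 0 | S m' => Cplus (csum m' f) (f m') end.

Fixpoint cpow (w : C) (k : nat) : C :=
  match k with O => RtoC 1 | S k' => Cmult w (cpow w k') end.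

Definition lap (m : nat) (g : pt -> R) (x : pt) : R :=
  rsum m (fun k => partial k (partial k g) x).

Definition harmonic_on (m : nat) (U : pt -> Prop) (F : pt -> C) : Prop :=
  open_m m U /\
  C2_on m U (fun x => Re (F x)) /\ C2_on m U (fun x => Im (F x)) /\
  forall x, U x -> lap m (fun x => Re (F x)) x = 0 /\ lap m (fun x => Im (F x)) x = 0.

Definition harmonic_C (U : C -> Prop) (f : C -> C) : Prop :=
  harmonic_on 2 (fun x => U (x 0%nat, x 1%nat)) (fun x => f (x 0%nat, x 1%nat)).

Definition harmonic_morphism (m : nat) (W : pt -> Prop) (phi : pt -> C) : Prop :=
  open_m m W /\
  forall (U : C -> Prop) (f : C -> C),
    harmonic_C U f ->
    (exists x, W x /\ U (phi x)) ->
    harmonic_on m (fun x => W x /\ U (phi x)) (fun x => f (phi x)).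

Definition cpartial (k : nat) (F : pt -> C) : pt -> C :=
  fun x => (partial k (fun y => Re (F y)) x, partial k (fun y => Im (F y)) x).

Definition tension (m : nat) (F : pt -> C) (x : pt) : C :=
  csum m (fun k => cpartial k (cpartial k F) x).

Definition kappa (m : nat) (F G : pt -> C) (x : pt) : C :=
  csum m (fun k => Cmult (cpartial k F x) (cpartial k G x)).

Definition quad (a : nat -> nat -> C) (x : pt) : C :=
  csum 3 (fun i => csum 3 (fun j => Cmult (a i j) (RtoC (x i * x j)))).

(** homogeneous degree-d holomorphic polynomial in z_0..z_{n-1}: a finite
    sum of terms c * z_{w 0} * ... * z_{w (d-1)} *)
Definition hpoly := list (C * (nat -> nat)).

Definition hp_wf (n d : nat) (l : hpoly) : Prop :=
  forall t, In t l -> forall j, (j < d)%nat -> (snd t j < n)%nat.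

Definition hp_eval (d : nat) (l : hpoly) (z : nat -> C) : C :=
  fold_right (fun t acc => Cplus (Cmult (fst t)
                (fold_right Cmult (RtoC 1) (map (fun j => z (snd t j)) (seq 0 d)))) acc)
             (RtoC 0) l.

(** complex coordinates: z_k (k = 0..n-1) = x_{2k+3} + i x_{2k+4} (0-indexed) *)
Definition zco (x : pt) : nat -> C := fun k => (x (2 * k + 3)%nat, x (2 * k + 4)%nat).

Definition csqrt (w : C) : C :=
  (sqrt ((Cmod w + Re w) / 2),
   (if Rlt_dec (Im w) 0 then -1 else 1) * sqrt ((Cmod w - Re w) / 2)).

Definition halfpow (d : nat) (w : C) : C :=
  if Nat.even d then cpow w (Nat.div2 d) else cpow (csqrt w) d.

Definition Phi_dom (d : nat) (a : nat -> nat -> C) (lQ : hpoly) (x : pt) : Prop :=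
  hp_eval d lQ (zco x) <> RtoC 0 /\
  (Nat.even d = true \/ ~ (Im (quad a x) = 0 /\ Re (quad a x) <= 0)).

Definition Phi_hat (d : nat) (a : nat -> nat -> C) (lP lQ : hpoly) (x : pt) : C :=
  Cdiv (Cplus (halfpow d (quad a x)) (hp_eval d lP (zco x))) (hp_eval d lQ (zco x)).

(* Main.v *)
Require Import Defs.
From Stdlib Require Import Reals List Lra Lia FunctionalExtensionality.
From Coquelicot Require Import Coquelicot.
Open Scope R_scope.

Lemma dR_val (f : R -> R) x l l' : is_derive f x l -> l = l' -> is_derive f x l'.
Proof. intros H ->; exact H. Qed.

Lemma dR_const (c x : R) : is_derive (fun _ : R => c) x 0.
Proof. apply (is_derive_const c x). Qed.

Lemma dR_id (x : R) : is_derive (fun t : R => t) x 1.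
Proof. apply (is_derive_id x). Qed.

Lemma dR_plus (f g : R -> R) x a b : is_derive f x a -> is_derive g x b ->
  is_derive (fun t => f t + g t) x (a + b).
Proof. intros; apply (is_derive_plus f g); auto. Qed.

Lemma dR_minus (f g : R -> R) x a b : is_derive f x a -> is_derive g x b ->
  is_derive (fun t => f t - g t) x (a - b).
Proof. intros; apply (is_derive_minus f g); auto. Qed.

Lemma dR_opp (f : R -> R) x a : is_derive f x a -> is_derive (fun t => - f t) x (- a).
Proof. intros; apply (is_derive_opp f); auto. Qed.

Lemma dR_mult (f g : R -> R) x a b : is_derive f x a -> is_derive g x b ->
  is_derive (fun t => f t * g t) x (a * g x + f x * b).
Proof. intros; apply (is_derive_mult f g); auto. intros; apply Rmult_comm. Qed.

Lemma dR_inv (f : R -> R) x a : is_derive f x a -> f x <> 0 ->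
  is_derive (fun t => / f t) x (- a / (f x) ^ 2).
Proof. intros; apply is_derive_inv; auto. Qed.

Lemma dR_sqrt (f : R -> R) x a : is_derive f x a -> 0 < f x ->
  is_derive (fun t => sqrt (f t)) x (a / (2 * sqrt (f x))).
Proof. intros; apply (is_derive_sqrt f); auto. Qed.

Lemma dR_ext (f g : R -> R) x l : (forall t, f t = g t) -> is_derive f x l -> is_derive g x l.
Proof. intros; apply (is_derive_ext f); auto. Qed.

Lemma dR_unique (f : R -> R) x l : is_derive f x l -> Derive f x = l.
Proof. intros; apply is_derive_unique; auto. Qed.

Lemma cont_2comp m (h : R -> R -> R) (g1 g2 : pt -> R) x :
  continuity_2d_pt h (g1 x) (g2 x) -> cont_at_m m g1 x -> cont_at_m m g2 x ->
  cont_at_m m (fun y => h (g1 y) (g2 y)) x.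
Proof.
  intros Hh H1 H2 eps Heps.
  destruct (Hh (mkposreal eps Heps)) as [d Hd].
  destruct (H1 d (cond_pos d)) as [d1 [Hd1 K1]].
  destruct (H2 d (cond_pos d)) as [d2 [Hd2 K2]].
  exists (Rmin d1 d2); split. apply Rmin_pos; auto.
  intros y Hy. apply (Hd (g1 y) (g2 y)).
  - apply K1; intros k Hk; specialize (Hy k Hk); eapply Rlt_le_trans; [exact Hy|apply Rmin_l].
  - apply K2; intros k Hk; specialize (Hy k Hk); eapply Rlt_le_trans; [exact Hy|apply Rmin_r].
Qed.

Lemma cont_const m c x : cont_at_m m (fun _ => c) x.
Proof. intros eps He; exists 1; split; [lra|]; intros; rewrite Rminus_eq_0, Rabs_R0; auto. Qed.

Lemma cont_coord m i x : (i < m)%nat -> cont_at_m m (fun y => y i) x.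
Proof. intros Hi eps He; exists eps; split; auto. Qed.

Lemma cont_coord_gen m i x : cont_at_m m (fun y => y i) x \/ (m <= i)%nat.
Proof. destruct (Nat.lt_ge_cases i m); [left; apply cont_coord|right]; auto. Qed.

Lemma cont_ext m (g h : pt -> R) x : (forall y, g y = h y) -> cont_at_m m g x -> cont_at_m m h x.
Proof. intros E H eps He; destruct (H eps He) as [d [Hd K]]; exists d; split; auto;
  intros y Hy; rewrite <- !E; auto. Qed.

Lemma cont_ext_loc m (g h : pt -> R) x e : 0 < e -> (forall y, near_m m x y e -> g y = h y) ->
  cont_at_m m g x -> cont_at_m m h x.
Proof.
  intros He E H eps Heps; destruct (H eps Heps) as [d [Hd K]]; exists (Rmin d e); split.
  apply Rmin_pos; auto.
  intros y Hy. rewrite <- (E y), <- (E x).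
  - apply K; intros k Hk; specialize (Hy k Hk); eapply Rlt_le_trans; [exact Hy|apply Rmin_l].
  - intros k Hk; rewrite Rminus_eq_0, Rabs_R0; auto.
  - intros k Hk; specialize (Hy k Hk); eapply Rlt_le_trans; [exact Hy|apply Rmin_r].
Qed.

Lemma cont_plus m g h x : cont_at_m m g x -> cont_at_m m h x -> cont_at_m m (fun y => g y + h y) x.
Proof. intros; apply (cont_2comp m (fun u v => u + v)); auto.
  apply continuity_2d_pt_plus; [apply continuity_2d_pt_id1|apply continuity_2d_pt_id2]. Qed.

Lemma cont_minus m g h x : cont_at_m m g x -> cont_at_m m h x -> cont_at_m m (fun y => g y - h y) x.
Proof. intros; apply (cont_2comp m (fun u v => u - v)); auto.
  apply continuity_2d_pt_minus; [apply continuity_2d_pt_id1|apply continuity_2d_pt_id2]. Qed.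

Lemma cont_mult m g h x : cont_at_m m g x -> cont_at_m m h x -> cont_at_m m (fun y => g y * h y) x.
Proof. intros; apply (cont_2comp m (fun u v => u * v)); auto.
  apply continuity_2d_pt_mult; [apply continuity_2d_pt_id1|apply continuity_2d_pt_id2]. Qed.

Lemma cont_opp m g x : cont_at_m m g x -> cont_at_m m (fun y => - g y) x.
Proof. intros; apply (cont_2comp m (fun u v => - u) g g); auto.
  apply continuity_2d_pt_opp; apply continuity_2d_pt_id1. Qed.

Lemma cont_inv m g x : cont_at_m m g x -> g x <> 0 -> cont_at_m m (fun y => / g y) x.
Proof. intros; apply (cont_2comp m (fun u v => / u) g g); auto.
  apply continuity_2d_pt_inv; [apply continuity_2d_pt_id1|auto]. Qed.

Lemma cont_comp1 m (f : R -> R) g x : continuity_pt f (g x) -> cont_at_m m g x ->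
  cont_at_m m (fun y => f (g y)) x.
Proof. intros; apply (cont_2comp m (fun u v => f u) g g); auto.
  apply (continuity_1d_2d_pt_comp f (fun u v => u)); auto; apply continuity_2d_pt_id1. Qed.

Definition ccont m (G : pt -> C) x := cont_at_m m (fun y => Re (G y)) x /\ cont_at_m m (fun y => Im (G y)) x.
Definition cder (g : R -> C) t (l : C) :=
  is_derive (fun s => Re (g s)) t (Re l) /\ is_derive (fun s => Im (g s)) t (Im l).

Lemma ccont_const m (c : C) x : ccont m (fun _ => c) x.
Proof. split; apply cont_const. Qed.

Lemma ccont_plus m G H x : ccont m G x -> ccont m H x -> ccont m (fun y => G y + H y)%C x.
Proof. intros [A B] [C D]; split; simpl; apply cont_plus; auto. Qed.

Lemma ccont_opp m G x : ccont m G x -> ccont m (fun y => - G y)%C x.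
Proof. intros [A B]; split; simpl; apply cont_opp; auto. Qed.

Lemma ccont_mult m G H x : ccont m G x -> ccont m H x -> ccont m (fun y => G y * H y)%C x.
Proof. intros [A B] [C D]; split; simpl.
  apply cont_minus; apply cont_mult; auto. apply cont_plus; apply cont_mult; auto. Qed.

Lemma ccont_inv m G x : ccont m G x -> G x <> 0%C -> ccont m (fun y => / G y)%C x.
Proof. intros [A B] Hn.
  assert (HD : fst (G x) ^ 2 + snd (G x) ^ 2 <> 0).
  { intro E; apply Hn. destruct (G x) as [a b]; simpl in E.
    assert (a = 0) by nra. assert (b = 0) by nra. subst; reflexivity. }
  assert (CD : cont_at_m m (fun y => / (fst (G y) ^ 2 + snd (G y) ^ 2)) x).
  { apply cont_inv; auto. apply cont_plus.
    - apply (cont_ext m (fun y => fst (G y) * (fst (G y) * 1))). intros; reflexivity.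
      repeat apply cont_mult; auto; apply cont_const.
    - apply (cont_ext m (fun y => snd (G y) * (snd (G y) * 1))). intros; reflexivity.
      repeat apply cont_mult; auto; apply cont_const. }
  split; simpl; unfold Rdiv.
  - apply cont_mult; auto.
  - apply cont_mult; auto. apply cont_opp; auto.
Qed.

Lemma cder_const (c : C) t : cder (fun _ => c) t 0%C.
Proof. split; apply dR_const. Qed.

Lemma cder_plus g h t a b : cder g t a -> cder h t b -> cder (fun s => g s + h s)%C t (a + b)%C.
Proof. intros [A B] [C D]; split; simpl; apply dR_plus; auto. Qed.

Lemma cder_opp g t a : cder g t a -> cder (fun s => - g s)%C t (- a)%C.
Proof. intros [A B]; split; simpl; apply dR_opp; auto. Qed.

Lemma cder_mult g h t a b : cder g t a -> cder h t b ->
  cder (fun s => g s * h s)%C t (a * h t + g t * b)%C.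
Proof. intros [A B] [C D]; split; simpl.
  - eapply dR_val. apply dR_minus; apply dR_mult; eauto. unfold Re, Im; simpl; ring.
  - eapply dR_val. apply dR_plus; apply dR_mult; eauto. unfold Re, Im; simpl; ring.
Qed.

Lemma cder_inv h t a : cder h t a -> h t <> 0%C ->
  cder (fun s => / h s)%C t (- (a * (/ h t * / h t)))%C.
Proof. intros [A B] Hn.
  destruct (h t) as [p q] eqn:Eh.
  assert (HD : p ^ 2 + q ^ 2 <> 0).
  { intro E; apply Hn.
    assert (p = 0) by nra. assert (q = 0) by nra. subst; reflexivity. }
  assert (DD : is_derive (fun s => fst (h s) ^ 2 + snd (h s) ^ 2) t (2 * p * fst a + 2 * q * snd a)).
  { eapply dR_val. apply (dR_ext (fun s => fst (h s) * fst (h s) + snd (h s) * snd (h s))).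
    intros; ring. apply dR_plus; apply dR_mult; eauto. simpl; rewrite Eh; unfold Re, Im; simpl; ring. }
  assert (DI := dR_inv _ _ _ DD). cbv beta in DI. rewrite Eh in DI. specialize (DI HD).
  split.
  - assert (KK := dR_mult _ _ t _ _ A DI). cbv beta in KK.
    eapply dR_val. eapply dR_ext; [|exact KK]. intros; reflexivity.
    rewrite Eh; unfold Re, Im; simpl. field; intro Hc; apply HD; nra.
  - assert (KK := dR_mult _ _ t _ _ (dR_opp _ _ _ B) DI). cbv beta in KK.
    eapply dR_val. eapply dR_ext; [|exact KK]. intros; reflexivity.
    rewrite Eh; unfold Re, Im; simpl. field; intro Hc; apply HD; nra.
Qed.

Lemma cder_unique_const (g : R -> C) t l c : (forall s, g s = c) -> cder g t l -> l = 0%C.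
Proof. intros E [A B].
  apply (dR_ext _ (fun _ => Re c)) in A; [|intros; rewrite E; auto].
  apply (dR_ext _ (fun _ => Im c)) in B; [|intros; rewrite E; auto].
  apply dR_unique in A; apply dR_unique in B. rewrite Derive_const in A, B.
  destruct l; simpl in *; subst; reflexivity.
Qed.

Lemma upd_same (x : pt) j : upd x j (x j) = x.
Proof. apply functional_extensionality; intro i; unfold upd.
  destruct (Nat.eqb_spec i j); subst; auto. Qed.

Definition D1 m (W : pt -> Prop) (G : pt -> C) (G1 : nat -> pt -> C) :=
  forall x, W x -> ccont m G x /\
    forall j, (j < m)%nat -> cder (fun t => G (upd x j t)) (x j) (G1 j x) /\ ccont m (G1 j) x.

Lemma D1_const m W (c : C) : D1 m W (fun _ => c) (fun _ _ => 0%C).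
Proof. intros x _; split. apply ccont_const. intros; split. apply cder_const. apply ccont_const. Qed.

Lemma D1_plus m W G G1 H H1 : D1 m W G G1 -> D1 m W H H1 ->
  D1 m W (fun x => G x + H x)%C (fun j x => G1 j x + H1 j x)%C.
Proof. intros HG HH x Wx; destruct (HG x Wx) as [cG dG]; destruct (HH x Wx) as [cH dH].
  split. apply ccont_plus; auto.
  intros j Hj; destruct (dG j Hj) as [a b]; destruct (dH j Hj) as [c d]; split.
  apply (cder_plus _ _ _ _ _ a c). apply ccont_plus; auto. Qed.

Lemma D1_opp m W G G1 : D1 m W G G1 -> D1 m W (fun x => - G x)%C (fun j x => - G1 j x)%C.
Proof. intros HG x Wx; destruct (HG x Wx) as [cG dG].
  split. apply ccont_opp; auto.
  intros j Hj; destruct (dG j Hj) as [a b]; split.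
  apply (cder_opp _ _ _ a). apply ccont_opp; auto. Qed.

Lemma D1_mult m W G G1 H H1 : D1 m W G G1 -> D1 m W H H1 ->
  D1 m W (fun x => G x * H x)%C (fun j x => G1 j x * H x + G x * H1 j x)%C.
Proof. intros HG HH x Wx; destruct (HG x Wx) as [cG dG]; destruct (HH x Wx) as [cH dH].
  split. apply ccont_mult; auto.
  intros j Hj; destruct (dG j Hj) as [a b]; destruct (dH j Hj) as [c d]; split.
  - pose proof (cder_mult _ _ _ _ _ a c) as K. cbv beta in K. rewrite upd_same in K. exact K.
  - apply ccont_plus; apply ccont_mult; auto. Qed.

Lemma D1_inv m W H H1 : D1 m W H H1 -> (forall x, W x -> H x <> 0%C) ->
  D1 m W (fun x => / H x)%C (fun j x => - (H1 j x * (/ H x * / H x)))%C.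
Proof. intros HH Hn x Wx; destruct (HH x Wx) as [cH dH].
  split. apply ccont_inv; auto.
  intros j Hj; destruct (dH j Hj) as [c d]; split.
  - pose proof (cder_inv _ _ _ c) as K. cbv beta in K. rewrite upd_same in K. apply K; auto.
  - apply ccont_opp; apply ccont_mult; auto; apply ccont_mult; apply ccont_inv; auto. Qed.

Lemma D1_ext m W G G' G1 : (forall x, G x = G' x) -> D1 m W G G1 -> D1 m W G' G1.
Proof. intros E; replace G' with G; auto. apply functional_extensionality; auto. Qed.

Lemma D1_dext m W G G1 G1' : (forall j x, G1 j x = G1' j x) -> D1 m W G G1 -> D1 m W G G1'.
Proof. intros E; replace G1' with G1; auto.
  apply functional_extensionality; intro j; apply functional_extensionality; auto. Qed.

Lemma D1_sub m (W W' : pt -> Prop) G G1 : (forall x, W' x -> W x) -> D1 m W G G1 -> D1 m W' G G1.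
Proof. intros S H x Wx; apply H; auto. Qed.

Definition C2 m W G G1 G2 := D1 m W G G1 /\ forall j, (j < m)%nat -> D1 m W (G1 j) (G2 j).

Lemma csum_ext m f g : (forall k, (k < m)%nat -> f k = g k) -> csum m f = csum m g.
Proof. induction m; simpl; intros; auto. rewrite IHm, H; auto. Qed.

Lemma csum_zero m : csum m (fun _ => 0%C) = 0%C.
Proof. induction m; simpl; auto. rewrite IHm. apply Cplus_0_r. Qed.

Lemma csum_plus m f g : csum m (fun k => f k + g k)%C = (csum m f + csum m g)%C.
Proof. induction m; simpl. rewrite Cplus_0_r; auto. rewrite IHm. ring. Qed.

Lemma csum_scal m c f : csum m (fun k => c * f k)%C = (c * csum m f)%C.
Proof. induction m; simpl. ring. rewrite IHm. ring. Qed.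

Lemma csum_lin2 m c1 c2 f1 f2 :
  csum m (fun k => c1 * f1 k + c2 * f2 k)%C = (c1 * csum m f1 + c2 * csum m f2)%C.
Proof. rewrite csum_plus, !csum_scal; auto. Qed.

Lemma csum_lin3 m c1 c2 c3 f1 f2 f3 :
  csum m (fun k => c1 * f1 k + c2 * f2 k + c3 * f3 k)%C =
  (c1 * csum m f1 + c2 * csum m f2 + c3 * csum m f3)%C.
Proof. rewrite !csum_plus, !csum_scal; auto. Qed.

Definition IsoOK m (W : pt -> Prop) (iso : pt -> (nat -> C) -> Prop) :=
  forall x, W x ->
    iso x (fun _ => 0%C) /\
    (forall v w a b, iso x v -> iso x w -> iso x (fun k => a * v k + b * w k)%C) /\
    (forall v w, iso x v -> iso x w -> csum m (fun k => v k * w k)%C = 0%C).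

Definition Good m W iso G := exists G1 G2, C2 m W G G1 G2 /\
  forall x, W x -> iso x (fun k => G1 k x) /\ csum m (fun k => G2 k k x) = 0%C.

Lemma iso_lin m W iso x v w a b : IsoOK m W iso -> W x -> iso x v -> iso x w ->
  forall v', (forall k, v' k = a * v k + b * w k)%C -> iso x v'.
Proof. intros I Wx Hv Hw v' E. replace v' with (fun k => a * v k + b * w k)%C.
  apply (I x Wx); auto. apply functional_extensionality; intros; rewrite E; auto. Qed.

Lemma Good_ext m W iso G G' : (forall x, G x = G' x) -> Good m W iso G -> Good m W iso G'.
Proof. intros E; replace G' with G; auto. apply functional_extensionality; auto. Qed.

Lemma Good_const m W iso (c : C) : IsoOK m W iso -> Good m W iso (fun _ => c).
Proof. intros I. exists (fun _ _ => 0%C), (fun _ _ _ => 0%C). split. split.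
  apply D1_const. intros; apply D1_const.
  intros x Wx; split. apply (I x Wx). apply csum_zero. Qed.

Lemma Good_plus m W iso G H : IsoOK m W iso -> Good m W iso G -> Good m W iso H ->
  Good m W iso (fun x => G x + H x)%C.
Proof. intros I [G1 [G2 [[DG DG2] TG]]] [H1 [H2 [[DH DH2] TH]]].
  exists (fun j x => G1 j x + H1 j x)%C, (fun j k x => G2 j k x + H2 j k x)%C.
  split. split. apply D1_plus; auto. intros j Hj; apply D1_plus; auto.
  intros x Wx; destruct (TG x Wx) as [iG tG]; destruct (TH x Wx) as [iH tH]; split.
  - apply (iso_lin _ _ _ x _ _ (RtoC 1) (RtoC 1) I Wx iG iH). intros; simpl; ring.
  - rewrite csum_plus, tG, tH; ring.
Qed.

Lemma Good_mult m W iso G H : IsoOK m W iso -> Good m W iso G -> Good m W iso H ->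
  Good m W iso (fun x => G x * H x)%C.
Proof. intros I [G1 [G2 [[DG DG2] TG]]] [H1 [H2 [[DH DH2] TH]]].
  exists (fun j x => G1 j x * H x + G x * H1 j x)%C,
    (fun j k x => (G2 j k x * H x + G1 j x * H1 k x) + (G1 k x * H1 j x + G x * H2 j k x))%C.
  split. split. apply D1_mult; auto. intros j Hj; apply D1_plus; apply D1_mult; auto.
  intros x Wx; destruct (TG x Wx) as [iG tG]; destruct (TH x Wx) as [iH tH]; split.
  - apply (iso_lin _ _ _ x _ _ (H x) (G x) I Wx iG iH). intros; simpl; ring.
  - destruct (I x Wx) as [_ [_ P]].
    rewrite (csum_ext _ _ (fun k => H x * G2 k k x + G x * H2 k k x + 2 * (G1 k x * H1 k x))%C).
    rewrite csum_lin3, tG, tH, (P _ _ iG iH). ring.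
    intros; ring.
Qed.

Lemma Good_inv m W iso H : IsoOK m W iso -> Good m W iso H -> (forall x, W x -> H x <> 0%C) ->
  Good m W iso (fun x => / H x)%C.
Proof. intros I [H1 [H2 [[DH DH2] TH]]] Hn.
  exists (fun j x => - (H1 j x * (/ H x * / H x)))%C,
    (fun j k x => - (H2 j k x * (/ H x * / H x) +
        H1 j x * (- (H1 k x * (/ H x * / H x)) * / H x + / H x * - (H1 k x * (/ H x * / H x)))))%C.
  split. split. apply D1_inv; auto.
  intros j Hj. apply D1_opp. apply D1_mult; auto. apply D1_mult; apply D1_inv; auto.
  intros x Wx; destruct (TH x Wx) as [iH tH]; split.
  - apply (iso_lin _ _ _ x _ _ (- (/ H x * / H x))%C (RtoC 0) I Wx iH iH). intros; simpl; ring.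
  - destruct (I x Wx) as [_ [_ P]].
    rewrite (csum_ext _ _ (fun k => (- (/ H x * / H x)) * H2 k k x
        + (2 * (/ H x * / H x * / H x)) * (H1 k x * H1 k x))%C).
    rewrite csum_lin2, tH, (P _ _ iH iH). ring.
    intros; ring.
Qed.

Lemma sqrt_pos_inv z : 0 < sqrt z -> 0 < z.
Proof. intros H. destruct (Rlt_le_dec 0 z); auto. rewrite sqrt_neg_0 in H; lra. Qed.

Lemma loc_pos (f : R -> R) t l : is_derive f t l -> 0 < f t -> locally t (fun s => 0 < f s).
Proof. intros D P. assert (Cf : continuity_pt f t).
  { apply continuity_pt_filterlim. apply (ex_derive_continuous f). exists l; auto. }
  apply continuity_pt_locally with (eps := mkposreal _ P) in Cf.
  eapply filter_imp; [|exact Cf]. intros s Hs; simpl in Hs; apply Rabs_def2 in Hs; lra. Qed.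

Lemma sq_inj x y : 0 <= x -> 0 <= y -> x * x = y * y -> x = y.
Proof. intros; nra. Qed.

Lemma cmod_facts a b : let r := sqrt (a ^ 2 + b ^ 2) in 0 <= r /\ r * r = a ^ 2 + b ^ 2 /\ - r <= a <= r.
Proof. intros r. assert (0 <= r) by apply sqrt_pos.
  assert (r * r = a ^ 2 + b ^ 2) by (apply sqrt_sqrt; nra). split; [auto|split; [auto|split; nra]]. Qed.

Lemma csqrt_sq w : (csqrt w * csqrt w)%C = w.
Proof. destruct w as [a b]. unfold csqrt, Cmod, Re, Im. simpl fst; simpl snd.
  destruct (cmod_facts a b) as [r0 [rr ra]]. set (r := sqrt (a ^ 2 + b ^ 2)) in *.
  assert (Ha : sqrt ((r + a) / 2) * sqrt ((r + a) / 2) = (r + a) / 2) by (apply sqrt_sqrt; lra).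
  assert (Hb : sqrt ((r - a) / 2) * sqrt ((r - a) / 2) = (r - a) / 2) by (apply sqrt_sqrt; lra).
  assert (Hab : sqrt ((r + a) / 2) * sqrt ((r - a) / 2) = Rabs b / 2).
  { apply sq_inj. apply Rmult_le_pos; apply sqrt_pos. apply Rmult_le_pos; [apply Rabs_pos|lra].
    replace (sqrt ((r + a) / 2) * sqrt ((r - a) / 2) * (sqrt ((r + a) / 2) * sqrt ((r - a) / 2)))
      with ((sqrt ((r + a) / 2) * sqrt ((r + a) / 2)) * (sqrt ((r - a) / 2) * sqrt ((r - a) / 2))) by ring.
    rewrite Ha, Hb. replace (Rabs b / 2 * (Rabs b / 2)) with ((Rabs b * Rabs b) / 4) by field.
    rewrite <- Rabs_mult, Rabs_right by nra. nra. }
  unfold Cmult; simpl fst; simpl snd. f_equal.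
  - destruct (Rlt_dec b 0); nra.
  - destruct (Rlt_dec b 0).
    + rewrite Rabs_left in Hab by auto. nra.
    + rewrite Rabs_right in Hab by lra. nra.
Qed.

Definition slit (w : C) := 0 < Re w \/ Im w <> 0.

Lemma csqrt_re_pos w : slit w -> 0 < Re (csqrt w).
Proof. destruct w as [a b]; unfold slit, csqrt, Cmod, Re, Im; cbn [fst snd]. intros Hs.
  destruct (cmod_facts a b) as [r0 [rr ra]]. set (r := sqrt (a ^ 2 + b ^ 2)) in *.
  apply sqrt_lt_R0. destruct Hs as [Hs|Hs]. lra.
  assert (0 < b * b) by (apply (Rsqr_pos_lt b); auto).
  assert (E : (r + a) * (r - a) = b * b) by nra.
  destruct (Rle_dec 0 a). nra.
  assert (0 < r - a) by lra.
  assert (0 < r + a). { destruct (Rle_dec (r + a) 0); [nra|lra]. }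
  lra. Qed.

Lemma csqrt_im w : Im (csqrt w) * (2 * Re (csqrt w)) = Im w.
Proof. pose proof (csqrt_sq w) as E. apply (f_equal Im) in E. rewrite <- E.
  unfold Cmult, Re, Im; simpl. ring. Qed.

Lemma cder_ext (g g' : R -> C) t l : (forall s, g s = g' s) -> cder g t l -> cder g' t l.
Proof. intros E [A B]; split; eapply dR_ext; eauto; intros; simpl; rewrite E; auto. Qed.

Lemma cder_unique g t a b : cder g t a -> cder g t b -> a = b.
Proof. intros [A B] [C D]. apply dR_unique in A, B, C, D.
  destruct a, b; unfold Re, Im in *; simpl in *; congruence. Qed.

Lemma C_solve (L S l : C) : S <> 0%C -> (L * S + S * L)%C = l -> L = (l * / (RtoC 2 * S))%C.
Proof. intros Hs E. subst l. field. auto. Qed.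

Lemma cder_csqrt h t l : cder h t l -> slit (h t) ->
  cder (fun s => csqrt (h s)) t (l * / (RtoC 2 * csqrt (h t)))%C.
Proof. intros [A B] Hs.
  assert (Hw : 0 < fst (h t) ^ 2 + snd (h t) ^ 2).
  { destruct Hs as [Hs|Hs]; unfold Re, Im in Hs.
    assert (0 < fst (h t) * fst (h t)) by nra. nra.
    assert (0 < snd (h t) * snd (h t)) by (apply (Rsqr_pos_lt (snd (h t))); auto). nra. }
  pose proof (dR_plus _ _ t _ _ (dR_mult _ _ t _ _ A A) (dR_mult _ _ t _ _ B B)) as D1'.
  cbv beta in D1'.
  apply (dR_ext _ (fun s => fst (h s) ^ 2 + snd (h s) ^ 2)) in D1'; [|intros; unfold Re, Im; ring].
  pose proof (dR_sqrt _ _ _ D1' Hw) as D2. cbv beta in D2.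
  pose proof (dR_mult _ _ t _ _ (dR_plus _ _ t _ _ D2 A) (dR_const (/ 2) t)) as D3. cbv beta in D3.
  assert (Hp := csqrt_re_pos _ Hs).
  assert (Hp' : 0 < (sqrt (fst (h t) ^ 2 + snd (h t) ^ 2) + Re (h t)) * / 2).
  { unfold csqrt in Hp; simpl in Hp. apply sqrt_pos_inv in Hp. unfold Cmod, Rdiv in Hp. exact Hp. }
  pose proof (dR_sqrt _ _ _ D3 Hp') as D4. cbv beta in D4.
  apply (dR_ext _ (fun s => Re (csqrt (h s)))) in D4; [|intros; reflexivity].
  set (LR := Derive (fun s => Re (csqrt (h s))) t).
  assert (DR : is_derive (fun s => Re (csqrt (h s))) t LR).
  { unfold LR; rewrite (dR_unique _ _ _ D4); exact D4. }
  clear D1' D2 D3 D4.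
  pose proof (DR' := DR).
  apply (dR_mult _ _ t _ _ (dR_const 2 t)) in DR'. cbv beta in DR'.
  assert (H2p : 2 * Re (csqrt (h t)) <> 0) by lra.
  pose proof (dR_mult _ _ t _ _ B (dR_inv _ _ _ DR' H2p)) as DI. cbv beta in DI.
  assert (DI' : is_derive (fun s => Im (csqrt (h s))) t
     (Im l * / (2 * Re (csqrt (h t))) + Im (h t) * (- (0 * Re (csqrt (h t)) + 2 * LR) / (2 * Re (csqrt (h t))) ^ 2))).
  { eapply is_derive_ext_loc; [|exact DI].
    eapply filter_imp; [|exact (loc_pos _ _ _ DR Hp)]. intros s Ps; simpl in Ps.
    rewrite <- (csqrt_im (h s)).
    assert (E : forall u v : R, v <> 0 -> u * v * / v = u) by (intros; field; auto).
    apply E. change (Re (csqrt (h s))) with (sqrt ((Cmod (h s) + Re (h s)) / 2)). lra. }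
  assert (CS : cder (fun s => csqrt (h s)) t (LR, Im l * / (2 * Re (csqrt (h t))) + Im (h t) * (- (0 * Re (csqrt (h t)) + 2 * LR) / (2 * Re (csqrt (h t))) ^ 2))).
  { split; auto. }
  set (L := (LR, _ : R)) in CS.
  pose proof (cder_mult _ _ _ _ _ CS CS) as CSS. cbv beta in CSS.
  apply (cder_ext _ h) in CSS; [|intros; apply csqrt_sq].
  assert (EL := cder_unique _ _ _ _ CSS (conj A B)).
  assert (Sn : csqrt (h t) <> 0%C).
  { intro E; rewrite E in Hp; simpl in Hp; lra. }
  replace (l * / (RtoC 2 * csqrt (h t)))%C with L. exact CS.
  apply C_solve; auto.
Qed.

Lemma ccont_csqrt m H x : ccont m H x -> slit (H x) -> ccont m (fun y => csqrt (H y)) x.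
Proof. intros [A B] Hs.
  assert (CM : cont_at_m m (fun y => Cmod (H y)) x).
  { apply (cont_comp1 m sqrt (fun y => fst (H y) ^ 2 + snd (H y) ^ 2)).
    apply continuity_pt_sqrt. nra.
    apply (cont_ext m (fun y => fst (H y) * (fst (H y) * 1) + snd (H y) * (snd (H y) * 1))).
    intros; reflexivity. apply cont_plus; repeat apply cont_mult; auto; apply cont_const. }
  assert (CR : cont_at_m m (fun y => Re (csqrt (H y))) x).
  { apply (cont_ext m (fun y => sqrt ((Cmod (H y) + Re (H y)) * / 2))). intros; reflexivity.
    apply (cont_comp1 m sqrt (fun y => (Cmod (H y) + Re (H y)) * / 2)).
    apply continuity_pt_sqrt. pose proof (csqrt_re_pos _ Hs) as P; unfold csqrt in P; simpl in P.
      apply sqrt_pos_inv in P. unfold Rdiv in P; lra.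
    apply cont_mult. apply cont_plus; auto. apply cont_const. }
  split; auto.
  assert (Hp := csqrt_re_pos _ Hs).
  destruct (CR _ Hp) as [d [Hd K]].
  apply (cont_ext_loc m (fun y => Im (H y) * / (2 * Re (csqrt (H y)))) _ x d Hd).
  { intros y Hy. specialize (K y Hy). apply Rabs_def2 in K.
    rewrite <- (csqrt_im (H y)). field. lra. }
  apply cont_mult; auto. apply cont_inv. apply cont_mult; auto; apply cont_const. lra.
Qed.

Lemma csqrt_nz w : slit w -> (RtoC 2 * csqrt w)%C <> 0%C.
Proof. intros Hs E. apply (f_equal Re) in E. pose proof (csqrt_re_pos _ Hs).
  unfold Cmult, Re, RtoC in *; simpl in *. lra. Qed.

Lemma D1_csqrt m W H H1 : D1 m W H H1 -> (forall x, W x -> slit (H x)) ->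
  D1 m W (fun x => csqrt (H x)) (fun j x => H1 j x * / (RtoC 2 * csqrt (H x)))%C.
Proof. intros HH Hs x Wx; destruct (HH x Wx) as [cH dH].
  split. apply ccont_csqrt; auto.
  intros j Hj; destruct (dH j Hj) as [c d]; split.
  - pose proof (cder_csqrt _ _ _ c) as K. cbv beta in K. rewrite upd_same in K. apply K; auto.
  - apply ccont_mult; auto. apply ccont_inv. apply ccont_mult. apply ccont_const.
    apply ccont_csqrt; auto. apply csqrt_nz; auto. Qed.

Lemma Good_csqrt m W iso H : IsoOK m W iso -> Good m W iso H -> (forall x, W x -> slit (H x)) ->
  Good m W iso (fun x => csqrt (H x)).
Proof. intros I [H1 [H2 [[DH DH2] TH]]] Hs.
  set (S := fun x => csqrt (H x)).
  set (S1 := fun j x => (H1 j x * / (RtoC 2 * csqrt (H x)))%C).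
  assert (DS : D1 m W S S1) by (apply D1_csqrt; auto).
  assert (D2S : D1 m W (fun x => RtoC 2 * S x)%C (fun k x => 0 * S x + RtoC 2 * S1 k x)%C).
  { apply D1_mult; auto. apply D1_const. }
  assert (DI : D1 m W (fun x => / (RtoC 2 * S x))%C
     (fun k x => - ((0 * S x + RtoC 2 * S1 k x) * (/ (RtoC 2 * S x) * / (RtoC 2 * S x))))%C).
  { apply D1_inv; auto. intros; apply csqrt_nz; auto. }
  exists S1, (fun j k x => H2 j k x * / (RtoC 2 * S x) +
     H1 j x * (- ((0 * S x + RtoC 2 * S1 k x) * (/ (RtoC 2 * S x) * / (RtoC 2 * S x)))))%C.
  split. split. exact DS.
  intros j Hj. apply D1_mult; auto.
  intros x Wx; destruct (TH x Wx) as [iH tH].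
  assert (iS : iso x (fun k => S1 k x)).
  { apply (iso_lin _ _ _ x _ _ (/ (RtoC 2 * S x))%C (RtoC 0) I Wx iH iH). intros; unfold S1, S; ring. }
  split; auto.
  destruct (I x Wx) as [_ [_ P]].
  rewrite (csum_ext _ _ (fun k => (/ (RtoC 2 * S x)) * H2 k k x
        + (- (RtoC 2 * (/ (RtoC 2 * S x)) * (/ (RtoC 2 * S x)))) * (H1 k x * S1 k x))%C).
  rewrite csum_lin2, tH, (P _ _ iH iS). ring.
  intros; ring.
Qed.

Lemma Good_cpow m W iso G k : IsoOK m W iso -> Good m W iso G -> Good m W iso (fun x => cpow (G x) k).
Proof. intros I HG; induction k; simpl. apply Good_const; auto. apply Good_mult; auto. Qed.

Lemma diff_from_partials (g gu gv : R -> R -> R) u0 v0 :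
  locally_2d (fun u v => is_derive (fun z => g z v) u (gu u v) /\ is_derive (fun z => g u z) v (gv u v)) u0 v0 ->
  continuity_2d_pt gu u0 v0 -> continuity_2d_pt gv u0 v0 ->
  differentiable_pt_lim g u0 v0 (gu u0 v0) (gv u0 v0).
Proof.
  intros [e He] Cu Cv eps.
  assert (Pe : 0 < eps / 2) by (destruct eps; simpl; lra).
  destruct (Cu (mkposreal _ Pe)) as [d1 Hd1]; destruct (Cv (mkposreal _ Pe)) as [d2 Hd2].
  assert (Pd : 0 < Rmin e (Rmin d1 d2)) by (destruct e, d1, d2; simpl; repeat apply Rmin_pos; auto).
  exists (mkposreal _ Pd); simpl; intros u v Hu Hv.
  assert (Hu1 : Rabs (u - u0) < e) by (eapply Rlt_le_trans; [exact Hu|apply Rmin_l]).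
  assert (Hv1 : Rabs (v - v0) < e) by (eapply Rlt_le_trans; [exact Hv|apply Rmin_l]).
  assert (Hu2 : Rabs (u - u0) < d1) by (eapply Rlt_le_trans; [exact Hu|]; eapply Rle_trans; [apply Rmin_r|apply Rmin_l]).
  assert (Hv2 : Rabs (v - v0) < d1) by (eapply Rlt_le_trans; [exact Hv|]; eapply Rle_trans; [apply Rmin_r|apply Rmin_l]).
  assert (Hv3 : Rabs (v - v0) < d2) by (eapply Rlt_le_trans; [exact Hv|]; eapply Rle_trans; [apply Rmin_r|apply Rmin_r]).
  destruct (MVT_cor4 (fun z => g z v) (fun z => gu z v) u0 (Rabs (u - u0))) with (b := u)
    as [c [Ec Hc]].
  { intros c Hc. apply (He c v); lra. }
  { lra. }
  destruct (MVT_cor4 (fun z => g u0 z) (fun z => gv u0 z) v0 (Rabs (v - v0))) with (b := v)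
    as [c' [Ec' Hc']].
  { intros c' Hc'. apply (He u0 c'). rewrite Rminus_eq_0, Rabs_R0; destruct e; simpl; lra. lra. }
  { lra. }
  replace (g u v - g u0 v0 - (gu u0 v0 * (u - u0) + gv u0 v0 * (v - v0)))
    with ((gu c v - gu u0 v0) * (u - u0) + (gv u0 c' - gv u0 v0) * (v - v0)) by lra.
  assert (K1 : Rabs (gu c v - gu u0 v0) < eps / 2) by (apply Hd1; lra).
  assert (K2 : Rabs (gv u0 c' - gv u0 v0) < eps / 2).
  { apply Hd2. rewrite Rminus_eq_0, Rabs_R0; destruct d2; simpl; lra. lra. }
  eapply Rle_trans. apply Rabs_triang. rewrite !Rabs_mult.
  assert (M1 := Rmax_l (Rabs (u - u0)) (Rabs (v - v0))).
  assert (M2 := Rmax_r (Rabs (u - u0)) (Rabs (v - v0))).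
  assert (0 <= Rabs (u - u0)) by apply Rabs_pos. assert (0 <= Rabs (v - v0)) by apply Rabs_pos.
  assert (0 <= Rabs (gu c v - gu u0 v0)) by apply Rabs_pos.
  assert (0 <= Rabs (gv u0 c' - gv u0 v0)) by apply Rabs_pos.
  nra.
Qed.

Definition gu (g : R -> R -> R) u v := Derive (fun z => g z v) u.
Definition gv (g : R -> R -> R) u v := Derive (fun z => g u z) v.
Definition mk (u v : R) : pt := fun i => if Nat.eqb i 0 then u else v.

Definition C2pt (g : R -> R -> R) u v :=
  ex_derive (fun z => g z v) u /\ ex_derive (fun z => g u z) v /\
  ex_derive (fun z => gu g z v) u /\ ex_derive (fun z => gu g u z) v /\
  ex_derive (fun z => gv g z v) u /\ ex_derive (fun z => gv g u z) v /\
  continuity_2d_pt g u v /\ continuity_2d_pt (gu g) u v /\ continuity_2d_pt (gv g) u v /\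
  continuity_2d_pt (gu (gu g)) u v /\ continuity_2d_pt (gv (gu g)) u v /\
  continuity_2d_pt (gu (gv g)) u v /\ continuity_2d_pt (gv (gv g)) u v.

Lemma cont2d_of (H : pt -> R) u0 v0 : cont_at_m 2 H (mk u0 v0) ->
  continuity_2d_pt (fun u v => H (mk u v)) u0 v0.
Proof. intros C eps. destruct (C eps (cond_pos eps)) as [d [Hd K]].
  exists (mkposreal d Hd); simpl; intros u v Hu Hv. apply K.
  intros k Hk. destruct k as [|[|k]]; simpl; auto; lia. Qed.

Lemma C2pt_of (V : R -> R -> Prop) (g : R -> R -> R) :
  C2_on 2 (fun y => V (y 0%nat) (y 1%nat)) (fun y => g (y 0%nat) (y 1%nat)) ->
  forall u v, V u v -> C2pt g u v.
Proof. intros HC u v Hv. destruct (HC (mk u v) Hv) as [C0 HJ].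
  destruct (HJ 0%nat ltac:(lia)) as [E0 [C1 HK0]].
  destruct (HJ 1%nat ltac:(lia)) as [E1 [C2' HK1]].
  destruct (HK0 0%nat ltac:(lia)) as [E00 C00].
  destruct (HK0 1%nat ltac:(lia)) as [E01 C01].
  destruct (HK1 0%nat ltac:(lia)) as [E10 C10].
  destruct (HK1 1%nat ltac:(lia)) as [E11 C11].
  assert (K0 : continuity_2d_pt g u v) by exact (cont2d_of _ _ _ C0).
  assert (K1 : continuity_2d_pt (gu g) u v) by exact (cont2d_of _ _ _ C1).
  assert (K2 : continuity_2d_pt (gv g) u v) by exact (cont2d_of _ _ _ C2').
  assert (K00 : continuity_2d_pt (gu (gu g)) u v) by exact (cont2d_of _ _ _ C00).
  assert (K01 : continuity_2d_pt (gv (gu g)) u v) by exact (cont2d_of _ _ _ C01).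
  assert (K10 : continuity_2d_pt (gu (gv g)) u v) by exact (cont2d_of _ _ _ C10).
  assert (K11 : continuity_2d_pt (gv (gv g)) u v) by exact (cont2d_of _ _ _ C11).
  repeat split; assumption.
Qed.

Lemma C2pt_loc (V : R -> R -> Prop) (g : R -> R -> R) u0 v0 :
  open_m 2 (fun y => V (y 0%nat) (y 1%nat)) ->
  C2_on 2 (fun y => V (y 0%nat) (y 1%nat)) (fun y => g (y 0%nat) (y 1%nat)) ->
  V u0 v0 -> locally_2d (C2pt g) u0 v0.
Proof. intros Ho HC Hv. destruct (Ho (mk u0 v0) Hv) as [e [He K]].
  exists (mkposreal e He). intros u v Hu Hv'. apply (C2pt_of V g HC).
  apply (K (mk u v)). intros k Hk. destruct k as [|[|k]]; [exact Hu|exact Hv'|lia]. Qed.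

Lemma diff_of_loc (h : R -> R -> R) u0 v0 :
  locally_2d (fun u v => ex_derive (fun z => h z v) u /\ ex_derive (fun z => h u z) v) u0 v0 ->
  continuity_2d_pt (gu h) u0 v0 -> continuity_2d_pt (gv h) u0 v0 ->
  differentiable_pt_lim h u0 v0 (gu h u0 v0) (gv h u0 v0).
Proof. intros L C1 C2. apply diff_from_partials; auto.
  eapply locally_2d_impl; [|exact L]. apply locally_2d_forall.
  intros u v [A B]; split; apply Derive_correct; auto. Qed.

Lemma C2pt_diffs g u0 v0 : locally_2d (C2pt g) u0 v0 ->
  continuity_2d_pt g u0 v0 /\
  differentiable_pt_lim g u0 v0 (gu g u0 v0) (gv g u0 v0) /\
  differentiable_pt_lim (gu g) u0 v0 (gu (gu g) u0 v0) (gv (gu g) u0 v0) /\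
  differentiable_pt_lim (gv g) u0 v0 (gu (gv g) u0 v0) (gv (gv g) u0 v0) /\
  continuity_2d_pt (gu g) u0 v0 /\ continuity_2d_pt (gv g) u0 v0 /\
  continuity_2d_pt (gu (gu g)) u0 v0 /\ continuity_2d_pt (gv (gu g)) u0 v0 /\
  continuity_2d_pt (gu (gv g)) u0 v0 /\ continuity_2d_pt (gv (gv g)) u0 v0.
Proof. intros L.
  assert (P : C2pt g u0 v0) by (destruct L as [d K]; apply K; rewrite Rminus_eq_0, Rabs_R0; apply cond_pos).
  destruct P as [_ [_ [_ [_ [_ [_ [c0 [c1 [c2 [c3 [c4 [c5 c6]]]]]]]]]]]].
  repeat split; auto.
  - apply diff_of_loc; auto. eapply locally_2d_impl; [|exact L]. apply locally_2d_forall.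
    intros u v P; destruct P as [A [B _]]; auto.
  - apply diff_of_loc; auto. eapply locally_2d_impl; [|exact L]. apply locally_2d_forall.
    intros u v P; destruct P as [_ [_ [A [B _]]]]; auto.
  - apply diff_of_loc; auto. eapply locally_2d_impl; [|exact L]. apply locally_2d_forall.
    intros u v P; destruct P as [_ [_ [_ [_ [A [B _]]]]]]; auto.
Qed.

Lemma chain1 (h : R -> R -> R) (p1 p2 : R -> R) t0 hu hv a b :
  differentiable_pt_lim h (p1 t0) (p2 t0) hu hv -> is_derive p1 t0 a -> is_derive p2 t0 b ->
  is_derive (fun t => h (p1 t) (p2 t)) t0 (hu * a + hv * b).
Proof. intros D A B. apply is_derive_Reals. apply is_derive_Reals in A. apply is_derive_Reals in B.
  apply derivable_pt_lim_comp_2d; auto. Qed.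

Lemma open_line m W x k : open_m m W -> W x -> (k < m)%nat -> locally (x k) (fun t => W (upd x k t)).
Proof. intros Ho Wx Hk. destruct (Ho x Wx) as [e [He K]].
  exists (mkposreal e He); intros t Ht. apply K. intros i Hi. unfold upd.
  destruct (Nat.eqb_spec i k). subst. exact Ht. rewrite Rminus_eq_0, Rabs_R0; auto. Qed.

Definition RD m (W : pt -> Prop) (f : pt -> R) (a : nat -> pt -> R) :=
  forall x, W x -> cont_at_m m f x /\
    forall j, (j < m)%nat -> is_derive (fun t => f (upd x j t)) (x j) (a j x) /\ cont_at_m m (a j) x.

Definition DF g (p1 p2 : pt -> R) (a b : nat -> pt -> R) j x :=
  gu g (p1 x) (p2 x) * a j x + gv g (p1 x) (p2 x) * b j x.
Definition D2F g (p1 p2 : pt -> R) (a b : nat -> pt -> R) (a2 b2 : nat -> nat -> pt -> R) j k x :=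
  (gu (gu g) (p1 x) (p2 x) * a k x + gv (gu g) (p1 x) (p2 x) * b k x) * a j x
  + gu g (p1 x) (p2 x) * a2 j k x
  + ((gu (gv g) (p1 x) (p2 x) * a k x + gv (gv g) (p1 x) (p2 x) * b k x) * b j x
  + gv g (p1 x) (p2 x) * b2 j k x).

Lemma rsum_ext m f g : (forall k, (k < m)%nat -> f k = g k) -> rsum m f = rsum m g.
Proof. induction m; simpl; intros; auto. rewrite IHm, H; auto. Qed.

Lemma cont_comp2d m (h : R -> R -> R) (p1 p2 : pt -> R) x :
  continuity_2d_pt h (p1 x) (p2 x) -> cont_at_m m p1 x -> cont_at_m m p2 x ->
  cont_at_m m (fun y => h (p1 y) (p2 y)) x.
Proof. apply cont_2comp. Qed.

Lemma comp_C2 m W g p1 p2 a b a2 b2 :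
  open_m m W -> RD m W p1 a -> RD m W p2 b ->
  (forall j, (j < m)%nat -> RD m W (a j) (a2 j)) -> (forall j, (j < m)%nat -> RD m W (b j) (b2 j)) ->
  (forall x, W x -> locally_2d (C2pt g) (p1 x) (p2 x)) ->
  C2_on m W (fun x => g (p1 x) (p2 x)) /\
  forall x, W x -> lap m (fun x => g (p1 x) (p2 x)) x = rsum m (fun k => D2F g p1 p2 a b a2 b2 k k x).
Proof.
  intros Ho R1 R2 RA RB Lg.
  set (F := fun x => g (p1 x) (p2 x)).
  assert (P1 : forall x j, W x -> (j < m)%nat -> is_derive (fun t => F (upd x j t)) (x j) (DF g p1 p2 a b j x)).
  { intros x j Wx Hj. destruct (C2pt_diffs _ _ _ (Lg x Wx)) as [_ [Dg _]].
    destruct (R1 x Wx) as [_ K1]; destruct (K1 j Hj) as [d1 _].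
    destruct (R2 x Wx) as [_ K2]; destruct (K2 j Hj) as [d2 _].
    apply (chain1 g (fun t => p1 (upd x j t)) (fun t => p2 (upd x j t))); auto.
    cbv beta; rewrite upd_same; exact Dg. }
  assert (P1' : forall x j, W x -> (j < m)%nat -> partial j F x = DF g p1 p2 a b j x).
  { intros; unfold partial; apply dR_unique; auto. }
  assert (P2 : forall x j k, W x -> (j < m)%nat -> (k < m)%nat ->
      is_derive (fun t => DF g p1 p2 a b j (upd x k t)) (x k) (D2F g p1 p2 a b a2 b2 j k x)).
  { intros x j k Wx Hj Hk. destruct (C2pt_diffs _ _ _ (Lg x Wx)) as [_ [_ [Du [Dv _]]]].
    destruct (R1 x Wx) as [_ K1]; destruct (K1 k Hk) as [d1 _].
    destruct (R2 x Wx) as [_ K2]; destruct (K2 k Hk) as [d2 _].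
    destruct (RA j Hj x Wx) as [_ KA]; destruct (KA k Hk) as [da _].
    destruct (RB j Hj x Wx) as [_ KB]; destruct (KB k Hk) as [db _].
    assert (Cu := chain1 (gu g) (fun t => p1 (upd x k t)) (fun t => p2 (upd x k t)) (x k) _ _ _ _
                   ltac:(cbv beta; rewrite upd_same; exact Du) d1 d2).
    assert (Cv := chain1 (gv g) (fun t => p1 (upd x k t)) (fun t => p2 (upd x k t)) (x k) _ _ _ _
                   ltac:(cbv beta; rewrite upd_same; exact Dv) d1 d2).
    pose proof (dR_plus _ _ _ _ _ (dR_mult _ _ _ _ _ Cu da) (dR_mult _ _ _ _ _ Cv db)) as E.
    cbv beta in E. rewrite !upd_same in E.
    unfold DF, D2F. eapply dR_val. exact E.
    match goal with |- @eq _ ?A ?B => change (@eq R A B) end. ring. }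
  assert (Loc : forall x, W x -> exists e, 0 < e /\ forall y, near_m m x y e -> W y) by exact Ho.
  assert (P2' : forall x j k, W x -> (j < m)%nat -> (k < m)%nat ->
      is_derive (fun t => partial j F (upd x k t)) (x k) (D2F g p1 p2 a b a2 b2 j k x)).
  { intros x j k Wx Hj Hk. eapply is_derive_ext_loc; [|exact (P2 x j k Wx Hj Hk)].
    eapply filter_imp; [|exact (open_line m W x k Ho Wx Hk)].
    intros t Wt; simpl. rewrite P1'; auto. }
  assert (P2'' : forall x j k, W x -> (j < m)%nat -> (k < m)%nat ->
      partial k (partial j F) x = D2F g p1 p2 a b a2 b2 j k x).
  { intros; unfold partial at 1; apply dR_unique; auto. }
  assert (CF : forall x, W x -> cont_at_m m F x).
  { intros x Wx. destruct (C2pt_diffs _ _ _ (Lg x Wx)) as [Cg _].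
    apply cont_comp2d; auto. apply (R1 x Wx). apply (R2 x Wx). }
  assert (CDF : forall x j, W x -> (j < m)%nat -> cont_at_m m (DF g p1 p2 a b j) x).
  { intros x j Wx Hj. destruct (C2pt_diffs _ _ _ (Lg x Wx)) as [_ [_ [_ [_ [Cu [Cv _]]]]]].
    destruct (R1 x Wx) as [c1 K1]; destruct (K1 j Hj) as [_ ca].
    destruct (R2 x Wx) as [c2 K2]; destruct (K2 j Hj) as [_ cb].
    unfold DF. apply cont_plus; apply cont_mult; auto; apply cont_comp2d; auto. }
  assert (CD2F : forall x j k, W x -> (j < m)%nat -> (k < m)%nat -> cont_at_m m (D2F g p1 p2 a b a2 b2 j k) x).
  { intros x j k Wx Hj Hk. destruct (C2pt_diffs _ _ _ (Lg x Wx)) as [_ [_ [_ [_ [Cu [Cv [Cuu [Cuv [Cvu Cvv]]]]]]]]].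
    destruct (R1 x Wx) as [c1 K1]; destruct (K1 j Hj) as [_ caj]; destruct (K1 k Hk) as [_ cak].
    destruct (R2 x Wx) as [c2 K2]; destruct (K2 j Hj) as [_ cbj]; destruct (K2 k Hk) as [_ cbk].
    destruct (RA j Hj x Wx) as [_ KA]; destruct (KA k Hk) as [_ ca2].
    destruct (RB j Hj x Wx) as [_ KB]; destruct (KB k Hk) as [_ cb2].
    unfold D2F. repeat first [apply cont_plus | apply cont_mult]; auto; apply cont_comp2d; auto. }
  split.
  - intros x Wx. split. apply CF; auto.
    intros j Hj. destruct (Ho x Wx) as [e [He K]]. split.
    + exists (DF g p1 p2 a b j x). apply P1; auto.
    + split.
      * apply (cont_ext_loc m (DF g p1 p2 a b j) _ x e He).
        intros y Hy; rewrite P1'; auto. apply CDF; auto.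
      * intros k Hk. split.
        -- exists (D2F g p1 p2 a b a2 b2 j k x). apply P2'; auto.
        -- apply (cont_ext_loc m (D2F g p1 p2 a b a2 b2 j k) _ x e He).
           intros y Hy; rewrite P2''; auto. apply CD2F; auto.
  - intros x Wx. unfold lap. apply rsum_ext. intros k Hk. apply P2''; auto.
Qed.

Lemma rsum_plus m f g : rsum m (fun k => f k + g k) = rsum m f + rsum m g.
Proof. induction m; simpl. ring. rewrite IHm. ring. Qed.

Lemma rsum_scal m c f : rsum m (fun k => c * f k) = c * rsum m f.
Proof. induction m; simpl. ring. rewrite IHm. ring. Qed.

Lemma Re_csum m f : Re (csum m f) = rsum m (fun k => Re (f k)).
Proof. induction m; simpl; auto. rewrite <- IHm; auto. Qed.

Lemma Im_csum m f : Im (csum m f) = rsum m (fun k => Im (f k)).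
Proof. induction m; simpl; auto. rewrite <- IHm; auto. Qed.

Lemma RD_of_D1 m W G G1 : D1 m W G G1 ->
  RD m W (fun x => Re (G x)) (fun j x => Re (G1 j x)) /\ RD m W (fun x => Im (G x)) (fun j x => Im (G1 j x)).
Proof. intros D; split; intros x Wx; destruct (D x Wx) as [[c1 c2] K]; split; auto;
  intros j Hj; destruct (K j Hj) as [[d1 d2] [e1 e2]]; split; auto. Qed.

Lemma RD_sub m (W W' : pt -> Prop) f a : (forall x, W' x -> W x) -> RD m W f a -> RD m W' f a.
Proof. intros S H x Wx; apply H; auto. Qed.

Lemma open_pre m W (Φ : pt -> C) (V : R -> R -> Prop) :
  open_m m W -> (forall x, W x -> ccont m Φ x) -> open_m 2 (fun y => V (y 0%nat) (y 1%nat)) ->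
  open_m m (fun x => W x /\ V (Re (Φ x)) (Im (Φ x))).
Proof. intros Ho Hc HV x [Wx Vx].
  destruct (Ho x Wx) as [e1 [He1 K1]].
  destruct (HV (mk (Re (Φ x)) (Im (Φ x))) Vx) as [e2 [He2 K2]].
  destruct (Hc x Wx) as [C1 C2].
  destruct (C1 e2 He2) as [d1 [Hd1 L1]]. destruct (C2 e2 He2) as [d2 [Hd2 L2]].
  exists (Rmin e1 (Rmin d1 d2)). split. repeat apply Rmin_pos; auto.
  intros y Hy. assert (N : forall d, Rmin e1 (Rmin d1 d2) <= d -> near_m m x y d).
  { intros d Hd k Hk. eapply Rlt_le_trans; [apply Hy; auto|auto]. }
  split. apply K1, N, Rmin_l.
  apply (K2 (mk (Re (Φ y)) (Im (Φ y)))). intros k Hk. destruct k as [|[|k]].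
  - apply L1, N. eapply Rle_trans; [apply Rmin_r|apply Rmin_l].
  - apply L2, N. eapply Rle_trans; [apply Rmin_r|apply Rmin_r].
  - lia.
Qed.

Lemma HM_real m W Φ Φ1 Φ2 (V : R -> R -> Prop) (g : R -> R -> R) :
  open_m m W -> C2 m W Φ Φ1 Φ2 ->
  (forall x, W x -> csum m (fun k => Φ1 k x * Φ1 k x)%C = 0%C /\ csum m (fun k => Φ2 k k x) = 0%C) ->
  open_m 2 (fun y => V (y 0%nat) (y 1%nat)) ->
  C2_on 2 (fun y => V (y 0%nat) (y 1%nat)) (fun y => g (y 0%nat) (y 1%nat)) ->
  (forall y, V (y 0%nat) (y 1%nat) -> lap 2 (fun y => g (y 0%nat) (y 1%nat)) y = 0) ->
  C2_on m (fun x => W x /\ V (Re (Φ x)) (Im (Φ x))) (fun x => g (Re (Φ x)) (Im (Φ x))) /\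
  forall x, W x /\ V (Re (Φ x)) (Im (Φ x)) -> lap m (fun x => g (Re (Φ x)) (Im (Φ x))) x = 0.
Proof.
  intros Ho [D DD] TK HoV C2g Lg.
  set (W' := fun x => W x /\ V (Re (Φ x)) (Im (Φ x))).
  assert (S : forall x, W' x -> W x) by (intros x [A _]; auto).
  assert (Ho' : open_m m W').
  { apply open_pre; auto. intros x Wx; apply (D x Wx). }
  destruct (RD_of_D1 _ _ _ _ D) as [R1 R2].
  destruct (comp_C2 m W' g (fun x => Re (Φ x)) (fun x => Im (Φ x)) (fun j x => Re (Φ1 j x)) (fun j x => Im (Φ1 j x))
     (fun j k x => Re (Φ2 j k x)) (fun j k x => Im (Φ2 j k x))) as [CC LL]; auto.
  - apply (RD_sub _ W); auto.
  - apply (RD_sub _ W); auto.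
  - intros j Hj; apply (RD_sub _ W); auto. apply (RD_of_D1 _ _ _ _ (DD j Hj)).
  - intros j Hj; apply (RD_sub _ W); auto. apply (RD_of_D1 _ _ _ _ (DD j Hj)).
  - intros x [Wx Vx]. apply (C2pt_loc V); auto.
  - split; auto. intros x Wx'. rewrite LL; auto.
    destruct Wx' as [Wx Vx]. destruct (TK x Wx) as [K T].
    set (u := Re (Φ x)) in *; set (v := Im (Φ x)) in *.
    assert (Lap2 : gu (gu g) u v + gv (gv g) u v = 0).
    { pose proof (Lg (mk u v) Vx) as L. change (0 + gu (gu g) u v + gv (gv g) u v = 0) in L. lra. }
    assert (KR := f_equal Re K). assert (KI := f_equal Im K).
    assert (TR := f_equal Re T). assert (TI := f_equal Im T).
    rewrite Re_csum in KR, TR. rewrite Im_csum in KI, TI. simpl in KR, KI, TR, TI.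
    unfold D2F.
    rewrite (rsum_ext _ _ (fun k =>
       gu (gu g) u v * (Re (Φ1 k x) * Re (Φ1 k x) - Im (Φ1 k x) * Im (Φ1 k x))
       + ((gv (gu g) u v + gu (gv g) u v) / 2) * (Re (Φ1 k x) * Im (Φ1 k x) + Im (Φ1 k x) * Re (Φ1 k x))
       + gu g u v * Re (Φ2 k k x) + gv g u v * Im (Φ2 k k x)
       + (gu (gu g) u v + gv (gv g) u v) * (Im (Φ1 k x) * Im (Φ1 k x)))).
    rewrite !rsum_plus, !rsum_scal. unfold Re, Im in *. rewrite KR, KI, TR, TI, Lap2. ring.
    intros k Hk. unfold u, v. field.
Qed.

Lemma pair_re_im (z : C) : (Re z, Im z) = z.
Proof. destruct z; reflexivity. Qed.

Lemma HM_general m W Φ Φ1 Φ2 :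
  open_m m W -> C2 m W Φ Φ1 Φ2 ->
  (forall x, W x -> csum m (fun k => Φ1 k x * Φ1 k x)%C = 0%C /\ csum m (fun k => Φ2 k k x) = 0%C) ->
  harmonic_morphism m W Φ.
Proof.
  intros Ho C TK. split; auto. intros U f Hf _.
  destruct Hf as [HoU [Cre [Cim Hl]]].
  destruct (HM_real m W Φ Φ1 Φ2 (fun u v => U (u, v)) (fun u v => Re (f (u, v))) Ho C TK HoU Cre)
    as [C1 L1]. { intros y Hy; apply (Hl y Hy). }
  destruct (HM_real m W Φ Φ1 Φ2 (fun u v => U (u, v)) (fun u v => Im (f (u, v))) Ho C TK HoU Cim)
    as [C2' L2]. { intros y Hy; apply (Hl y Hy). }
  assert (EW : (fun x => W x /\ U (Re (Φ x), Im (Φ x))) = (fun x => W x /\ U (Φ x))).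
  { apply functional_extensionality; intros x; rewrite pair_re_im; auto. }
  assert (E1 : (fun x => Re (f (Re (Φ x), Im (Φ x)))) = (fun x => Re (f (Φ x)))).
  { apply functional_extensionality; intros x; rewrite pair_re_im; auto. }
  assert (E2 : (fun x => Im (f (Re (Φ x), Im (Φ x)))) = (fun x => Im (f (Φ x)))).
  { apply functional_extensionality; intros x; rewrite pair_re_im; auto. }
  assert (Ho' := open_pre m W Φ (fun u v => U (u, v)) Ho ltac:(intros x Wx; apply (proj1 C x Wx)) HoU).
  cbv beta in C1, L1, C2', L2, Ho'.
  rewrite EW, E1 in C1. rewrite EW, E2 in C2'. rewrite EW in Ho'.
  split; auto. split; auto. split; auto.
  intros x [Wx Ux]. rewrite <- E1, <- E2. split.
  apply L1; rewrite pair_re_im; auto. apply L2; rewrite pair_re_im; auto.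
Qed.

Definition indc (a k : nat) : R := if Nat.eqb a k then 1 else 0.

Lemma upd_at (x : pt) j t i : upd x j t i = if Nat.eqb i j then t else x i.
Proof. reflexivity. Qed.

Lemma cder_coord (x : pt) j i : cder (fun t => RtoC (upd x j t i)) (x j) (RtoC (indc i j)).
Proof. split; simpl.
  - unfold indc, upd. destruct (Nat.eqb i j). apply dR_id. apply dR_const.
  - apply dR_const. Qed.

Lemma D1_coord m W i : (i < m)%nat -> D1 m W (fun x => RtoC (x i)) (fun j x => RtoC (indc i j)).
Proof. intros Hi x Wx. split. split; simpl. apply cont_coord; auto. apply cont_const.
  intros j Hj; split. apply cder_coord. apply ccont_const. Qed.

Definition C2e m W G := exists G1 G2, C2 m W G G1 G2.

Lemma C2e_const m W c : C2e m W (fun _ => c).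
Proof. exists (fun _ _ => 0%C), (fun _ _ _ => 0%C). split. apply D1_const. intros; apply D1_const. Qed.

Lemma C2e_coord m W i : (i < m)%nat -> C2e m W (fun x => RtoC (x i)).
Proof. intros Hi. exists (fun j x => RtoC (indc i j)), (fun _ _ _ => 0%C). split.
  apply D1_coord; auto. intros; apply D1_const. Qed.

Lemma C2e_plus m W G H : C2e m W G -> C2e m W H -> C2e m W (fun x => G x + H x)%C.
Proof. intros [G1 [G2 [DG DG2]]] [H1 [H2 [DH DH2]]].
  exists (fun j x => G1 j x + H1 j x)%C, (fun j k x => G2 j k x + H2 j k x)%C.
  split. apply D1_plus; auto. intros j Hj; apply D1_plus; auto. Qed.

Lemma C2e_mult m W G H : C2e m W G -> C2e m W H -> C2e m W (fun x => G x * H x)%C.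
Proof. intros [G1 [G2 [DG DG2]]] [H1 [H2 [DH DH2]]].
  exists (fun j x => G1 j x * H x + G x * H1 j x)%C,
    (fun j k x => (G2 j k x * H x + G1 j x * H1 k x) + (G1 k x * H1 j x + G x * H2 j k x))%C.
  split. apply D1_mult; auto. intros j Hj; apply D1_plus; apply D1_mult; auto. Qed.

Lemma C2e_ext m W G G' : (forall x, G x = G' x) -> C2e m W G -> C2e m W G'.
Proof. intros E; replace G' with G; auto. apply functional_extensionality; auto. Qed.

Lemma C2e_csum m W N (F : nat -> pt -> C) : (forall i, (i < N)%nat -> C2e m W (F i)) ->
  C2e m W (fun x => csum N (fun i => F i x)).
Proof. induction N; intros H; simpl. apply C2e_const.
  apply C2e_plus. apply IHN; auto. apply H; auto. Qed.

Lemma C2e_quad m W a : (3 <= m)%nat -> C2e m W (quad a).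
Proof. intros Hm. unfold quad. apply C2e_csum; intros i Hi. apply C2e_csum; intros j Hj.
  apply (C2e_ext m W (fun x => a i j * (RtoC (x i) * RtoC (x j)))%C).
  intros x; f_equal. unfold RtoC, Cmult; simpl. f_equal; ring.
  apply C2e_mult. apply C2e_const. apply C2e_mult; apply C2e_coord; lia. Qed.

Lemma quad_upd a x k t : (3 <= k)%nat -> quad a (upd x k t) = quad a x.
Proof. intros Hk. unfold quad, upd. destruct k as [|[|[|k]]]; try lia. reflexivity. Qed.

Lemma cpartial_eq m k (F : pt -> C) (F1 : nat -> pt -> C) :
  D1 m (fun _ => True) F F1 -> (k < m)%nat -> forall x, cpartial k F x = F1 k x.
Proof. intros D Hk x. destruct (D x I) as [_ K]. destruct (K k Hk) as [[A B] _].
  unfold cpartial, partial. rewrite <- (pair_re_im (F1 k x)). f_equal; apply dR_unique; auto. Qed.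

Lemma cpartial_ext k (F G : pt -> C) x : (forall y, F y = G y) -> cpartial k F x = cpartial k G x.
Proof. intros E. replace G with F; auto. apply functional_extensionality; auto. Qed.

Lemma csum_trunc m (f : nat -> C) : (3 <= m)%nat -> (forall k, (3 <= k)%nat -> (k < m)%nat -> f k = 0%C) ->
  csum m f = csum 3 f.
Proof. induction m; intros Hm H. lia.
  destruct (Nat.eq_dec m 2). subst; reflexivity.
  simpl. rewrite IHm; try lia. rewrite H; try lia. apply Cplus_0_r.
  intros; apply H; lia. Qed.

Lemma quad_facts m a P1 P2 : (3 <= m)%nat -> C2 m (fun _ => True) (quad a) P1 P2 ->
  (forall x : pt, tension 3 (quad a) x = RtoC 0 /\ kappa 3 (quad a) (quad a) x = RtoC 0) ->
  (forall x k, (3 <= k)%nat -> (k < m)%nat -> P1 k x = 0%C) /\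
  (forall x k, (3 <= k)%nat -> (k < m)%nat -> P2 k k x = 0%C) /\
  (forall x, csum 3 (fun k => P1 k x * P1 k x)%C = 0%C) /\
  (forall x, csum 3 (fun k => P2 k k x) = 0%C).
Proof. intros Hm [D DD] Hyp.
  assert (A : forall x k, (3 <= k)%nat -> (k < m)%nat -> P1 k x = 0%C).
  { intros x k Hk Hkm. destruct (D x I) as [_ K]. destruct (K k Hkm) as [c _].
    apply (cder_unique_const _ _ _ (quad a x)) in c; auto. intros; apply quad_upd; auto. }
  split; auto. split.
  { intros x k Hk Hkm. destruct (DD k Hkm x I) as [_ K]. destruct (K k Hkm) as [c _].
    apply (cder_unique_const _ _ _ 0%C) in c; auto. }
  split.
  - intros x. destruct (Hyp x) as [_ Kp]. rewrite <- Kp. unfold kappa.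
    apply csum_ext; intros k Hk. rewrite (cpartial_eq m k _ P1 D); auto; lia.
  - intros x. destruct (Hyp x) as [Tp _]. rewrite <- Tp. unfold tension.
    apply csum_ext; intros k Hk.
    rewrite (cpartial_ext k (cpartial k (quad a)) (P1 k)).
    rewrite (cpartial_eq m k _ (P2 k) (DD k ltac:(lia))); auto; lia.
    intros; apply (cpartial_eq m k _ P1 D); lia.
Qed.

Definition Zv (i k : nat) : C := (indc (2 * i + 3)%nat k, indc (2 * i + 4)%nat k).

Lemma D1_zco m W i : (2 * i + 4 < m)%nat -> D1 m W (fun x => zco x i) (fun j _ => Zv i j).
Proof. intros Hi x Wx. split. split; simpl; apply cont_coord; lia.
  intros j Hj; split.
  - destruct (cder_coord x j (2 * i + 3)) as [A _]; destruct (cder_coord x j (2 * i + 4)) as [B _].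
    split; [exact A|exact B].
  - apply ccont_const. Qed.

Lemma rsum_ind_ne m a b : a <> b -> rsum m (fun k => indc a k * indc b k) = 0.
Proof. intros Hab; induction m; simpl; auto. rewrite IHm. unfold indc.
  destruct (Nat.eqb_spec a m); destruct (Nat.eqb_spec b m); try lia; ring. Qed.

Lemma rsum_ind_out m a b : (m <= a)%nat -> rsum m (fun k => indc a k * indc b k) = 0.
Proof. induction m; intros Ha; simpl; auto. rewrite IHm by lia. unfold indc.
  destruct (Nat.eqb_spec a m); try lia; ring. Qed.

Lemma rsum_ind_eq m a : (a < m)%nat -> rsum m (fun k => indc a k * indc a k) = 1.
Proof. induction m; intros Ha. lia. simpl. unfold indc at 3 4.
  destruct (Nat.eqb_spec a m).
  - subst. rewrite rsum_ind_out by lia. ring.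
  - rewrite IHm by lia. ring.
Qed.

Lemma rsum_minus m f g : rsum m (fun k => f k - g k) = rsum m f - rsum m g.
Proof. induction m; simpl. ring. rewrite IHm. ring. Qed.

Lemma csum_swap A B (f : nat -> nat -> C) :
  csum A (fun k => csum B (fun i => f k i)) = csum B (fun i => csum A (fun k => f k i)).
Proof. induction A; simpl. rewrite csum_zero; auto. rewrite IHA, <- csum_plus; auto. Qed.

Lemma csum_mult_l A f c : (csum A f * c)%C = csum A (fun k => f k * c)%C.
Proof. induction A; simpl. ring. rewrite <- IHA. ring. Qed.

Lemma Zv_pair n m i l : (2 * n + 3 <= m)%nat -> (i < n)%nat -> (l < n)%nat ->
  csum m (fun k => Zv i k * Zv l k)%C = 0%C.
Proof. intros Hm Hi Hl. rewrite <- (pair_re_im (csum _ _)). rewrite Re_csum, Im_csum.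
  rewrite (rsum_ext m _ (fun k => indc (2 * i + 3) k * indc (2 * l + 3) k - indc (2 * i + 4) k * indc (2 * l + 4) k))
    by (intros; reflexivity).
  rewrite (rsum_ext m (fun k => Im _) (fun k => indc (2 * i + 3) k * indc (2 * l + 4) k + indc (2 * i + 4) k * indc (2 * l + 3) k))
    by (intros; reflexivity).
  rewrite rsum_minus, rsum_plus, (rsum_ind_ne m (2 * i + 3) (2 * l + 4)), (rsum_ind_ne m (2 * i + 4) (2 * l + 3)) by lia.
  destruct (Nat.eq_dec i l).
  - subst. rewrite !rsum_ind_eq by lia. unfold RtoC; f_equal; ring.
  - rewrite !rsum_ind_ne by lia. unfold RtoC; f_equal; ring.
Qed.

Lemma zc_pair n m (c d : nat -> C) : (2 * n + 3 <= m)%nat ->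
  csum m (fun k => csum n (fun i => c i * Zv i k) * csum n (fun l => d l * Zv l k))%C = 0%C.
Proof. intros Hm.
  rewrite (csum_ext m _ (fun k => csum n (fun i => csum n (fun l => (c i * d l) * (Zv i k * Zv l k)))))%C.
  2:{ intros k Hk. rewrite csum_mult_l. apply csum_ext; intros i Hi.
      rewrite <- csum_scal. apply csum_ext; intros; ring. }
  rewrite csum_swap.
  rewrite (csum_ext n _ (fun i => csum n (fun l => (c i * d l) * csum m (fun k => Zv i k * Zv l k))))%C.
  2:{ intros i Hi. rewrite csum_swap. apply csum_ext; intros l Hl. rewrite csum_scal; auto. }
  rewrite (csum_ext n _ (fun _ => 0%C)). apply csum_zero.
  intros i Hi. rewrite (csum_ext n _ (fun _ => 0%C)). apply csum_zero.
  intros l Hl. rewrite (Zv_pair n m i l) by lia. ring.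
Qed.

Definition iso n m (P1 : nat -> pt -> C) (x : pt) (v : nat -> C) :=
  exists (c0 : C) (c : nat -> C), forall k, (k < m)%nat -> v k = (c0 * P1 k x + csum n (fun i => c i * Zv i k))%C.

Lemma P_zc n m (P1 : nat -> pt -> C) x c k : (forall x k, (3 <= k)%nat -> (k < m)%nat -> P1 k x = 0%C) ->
  (k < m)%nat -> (P1 k x * csum n (fun i => c i * Zv i k))%C = 0%C.
Proof. intros HP Hk. destruct (Nat.lt_ge_cases k 3).
  - rewrite (csum_ext n _ (fun _ => 0%C)). rewrite csum_zero; ring.
    intros i Hi. unfold Zv, indc. destruct (Nat.eqb_spec (2 * i + 3) k); try lia.
    destruct (Nat.eqb_spec (2 * i + 4) k); try lia. apply Cmult_0_r.
  - rewrite HP; auto. ring.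
Qed.

Lemma IsoOK_iso n m W (P1 : nat -> pt -> C) : m = (2 * n + 3)%nat ->
  (forall x k, (3 <= k)%nat -> (k < m)%nat -> P1 k x = 0%C) ->
  (forall x, csum 3 (fun k => P1 k x * P1 k x)%C = 0%C) ->
  IsoOK m W (iso n m P1).
Proof. intros Em HP HK x _. split; [|split].
  - exists 0%C, (fun _ => 0%C). intros k Hk.
    rewrite (csum_ext n _ (fun _ => 0%C)). rewrite csum_zero; ring. intros; ring.
  - intros v w a b [c0 [c Hv]] [d0 [d Hw]].
    exists (a * c0 + b * d0)%C, (fun i => a * c i + b * d i)%C. intros k Hk.
    rewrite Hv, Hw by auto.
    rewrite (csum_ext n (fun i => (a * c i + b * d i) * Zv i k)%C (fun i => a * (c i * Zv i k) + b * (d i * Zv i k))%C)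
      by (intros; ring).
    rewrite csum_lin2. ring.
  - intros v w [c0 [c Hv]] [d0 [d Hw]].
    rewrite (csum_ext m _ (fun k => (c0 * d0) * (P1 k x * P1 k x) + RtoC 1 *
         (csum n (fun i => c i * Zv i k) * csum n (fun l => d l * Zv l k)))%C).
    rewrite csum_lin2, zc_pair by lia. rewrite (csum_trunc m (fun k => (P1 k x * P1 k x)%C)).
    2: lia. 2:{ intros k H3 Hk. rewrite HP; auto. ring. }
    rewrite HK. ring.
    intros k Hk. rewrite Hv, Hw by auto.
    pose proof (P_zc n m P1 x c k HP Hk). pose proof (P_zc n m P1 x d k HP Hk).
    transitivity ((c0 * d0) * (P1 k x * P1 k x) + RtoC 1 * (csum n (fun i => c i * Zv i k) * csum n (fun l => d l * Zv l k))
       + c0 * (P1 k x * csum n (fun i => d i * Zv i k)) + d0 * (P1 k x * csum n (fun i => c i * Zv i k)))%C.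
    ring. rewrite H, H0. ring.
Qed.

Lemma csum_single_out n i (f : nat -> C) : (n <= i)%nat ->
  csum n (fun l => ((if Nat.eqb l i then RtoC 1 else RtoC 0) * f l)%C) = 0%C.
Proof. induction n; intros Hi; simpl; auto. rewrite IHn by lia.
  destruct (Nat.eqb_spec n i); try lia. ring. Qed.

Lemma csum_single n i (f : nat -> C) : (i < n)%nat ->
  csum n (fun l => ((if Nat.eqb l i then RtoC 1 else RtoC 0) * f l)%C) = f i.
Proof. induction n; intros Hi; simpl. lia.
  destruct (Nat.eqb_spec n i).
  - subst. rewrite csum_single_out by lia. ring.
  - rewrite IHn by lia. ring. Qed.

Lemma Good_zco n m W P1 i : m = (2 * n + 3)%nat -> (i < n)%nat -> IsoOK m W (iso n m P1) ->
  Good m W (iso n m P1) (fun x => zco x i).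
Proof. intros Em Hi I. exists (fun j _ => Zv i j), (fun _ _ _ => 0%C). split. split.
  apply D1_zco; lia. intros; apply D1_const.
  intros x Wx. split.
  - exists 0%C, (fun l => if Nat.eqb l i then RtoC 1 else RtoC 0). intros k Hk.
    rewrite csum_single by auto. ring.
  - apply csum_zero.
Qed.

Lemma Good_prod n m W P1 (w : nat -> nat) L : m = (2 * n + 3)%nat -> IsoOK m W (iso n m P1) ->
  (forall j, In j L -> (w j < n)%nat) ->
  Good m W (iso n m P1) (fun x => fold_right Cmult (RtoC 1) (map (fun j => zco x (w j)) L)).
Proof. intros Em I; induction L as [|j L IH]; intros Hw; simpl.
  - apply Good_const; auto.
  - apply Good_mult; auto.
    + apply Good_zco; auto. apply Hw; simpl; auto.
    + apply IH; intros; apply Hw; simpl; auto.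
Qed.

Lemma Good_hp n m W P1 d l : m = (2 * n + 3)%nat -> IsoOK m W (iso n m P1) -> hp_wf n d l ->
  Good m W (iso n m P1) (fun x => hp_eval d l (zco x)).
Proof. intros Em I; induction l as [|t l IH]; intros Hw; simpl.
  - apply Good_const; auto.
  - apply Good_plus; auto.
    + apply Good_mult; auto. apply Good_const; auto. apply Good_prod; auto.
      intros j Hj. apply in_seq in Hj. apply (Hw t); simpl; auto; lia.
    + apply IH. intros t' Ht' j Hj; apply (Hw t'); simpl; auto.
Qed.

Lemma Good_quad n m W a P1 P2 : m = (2 * n + 3)%nat -> IsoOK m W (iso n m P1) ->
  C2 m (fun _ => True) (quad a) P1 P2 ->
  (forall x k, (3 <= k)%nat -> (k < m)%nat -> P2 k k x = 0%C) ->
  (forall x, csum 3 (fun k => P2 k k x) = 0%C) ->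
  Good m W (iso n m P1) (quad a).
Proof. intros Em I [D DD] Z T. exists P1, P2. split. split.
  apply (D1_sub _ (fun _ => True)); auto. intros j Hj; apply (D1_sub _ (fun _ => True)); auto.
  intros x Wx. split.
  - exists (RtoC 1), (fun _ => 0%C). intros k Hk.
    rewrite (csum_ext n _ (fun _ => 0%C)) by (intros; ring). rewrite csum_zero. ring.
  - rewrite (csum_trunc m (fun k => P2 k k x)). apply T. lia. intros; apply Z; auto.
Qed.

Lemma cont_neq m f x : cont_at_m m f x -> f x <> 0 -> exists e, 0 < e /\ forall y, near_m m x y e -> f y <> 0.
Proof. intros C Hf. destruct (C (Rabs (f x)) (Rabs_pos_lt _ Hf)) as [d [Hd K]].
  exists d; split; auto. intros y Hy E. specialize (K y Hy). rewrite E in K.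
  rewrite Rminus_0_l, Rabs_Ropp in K. lra. Qed.

Lemma cont_pos' m f x : cont_at_m m f x -> 0 < f x -> exists e, 0 < e /\ forall y, near_m m x y e -> 0 < f y.
Proof. intros C Hf. destruct (C (f x) Hf) as [d [Hd K]].
  exists d; split; auto. intros y Hy. specialize (K y Hy). apply Rabs_def2 in K. lra. Qed.

Lemma near_mono m x y e e' : near_m m x y e -> e <= e' -> near_m m x y e'.
Proof. intros H He k Hk. eapply Rlt_le_trans; [apply H|]; auto. Qed.

Lemma open_dom m d a lQ : (forall x, ccont m (quad a) x) ->
  (forall x, Phi_dom d a lQ x -> ccont m (fun x => hp_eval d lQ (zco x)) x) ->
  open_m m (Phi_dom d a lQ).
Proof. intros Cq CQ x [HQ Hq].
  assert (A : exists e1, 0 < e1 /\ forall y, near_m m x y e1 -> hp_eval d lQ (zco y) <> 0%C).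
  { destruct (CQ x (conj HQ Hq)) as [C1 C2].
    destruct (Req_dec (Re (hp_eval d lQ (zco x))) 0) as [E1|E1].
    - destruct (Req_dec (Im (hp_eval d lQ (zco x))) 0) as [E2|E2].
      + exfalso; apply HQ. rewrite <- (pair_re_im (hp_eval d lQ (zco x))), E1, E2; reflexivity.
      + destruct (cont_neq _ _ _ C2 E2) as [e [He K]]. exists e; split; auto.
        intros y Hy E; apply (K y Hy); rewrite E; reflexivity.
    - destruct (cont_neq _ _ _ C1 E1) as [e [He K]]. exists e; split; auto.
      intros y Hy E; apply (K y Hy); rewrite E; reflexivity. }
  assert (B : exists e2, 0 < e2 /\ forall y, near_m m x y e2 ->
      (Nat.even d = true \/ ~ (Im (quad a y) = 0 /\ Re (quad a y) <= 0))).
  { destruct Hq as [Hq|Hq]. exists 1; split; [lra|]; auto.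
    destruct (Cq x) as [C1 C2].
    destruct (Req_dec (Im (quad a x)) 0) as [E2|E2].
    - assert (P : 0 < Re (quad a x)) by (apply Rnot_le_lt; intro; apply Hq; auto).
      destruct (cont_pos' _ _ _ C1 P) as [e [He K]]. exists e; split; auto.
      intros y Hy; right; intros [_ F]; specialize (K y Hy); lra.
    - destruct (cont_neq _ _ _ C2 E2) as [e [He K]]. exists e; split; auto.
      intros y Hy; right; intros [F _]; apply (K y Hy); auto. }
  destruct A as [e1 [He1 K1]]; destruct B as [e2 [He2 K2]].
  exists (Rmin e1 e2); split. apply Rmin_pos; auto.
  intros y Hy; split.
  apply K1, (near_mono _ _ _ _ _ Hy), Rmin_l.
  apply K2, (near_mono _ _ _ _ _ Hy), Rmin_r.
Qed.

Theorem mainTheorem1 (n d : nat) (a : nat -> nat -> C) (lP lQ : hpoly) :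
  (1 <= n)%nat -> (1 <= d)%nat ->
  (forall x : pt, tension 3 (quad a) x = RtoC 0 /\ kappa 3 (quad a) (quad a) x = RtoC 0) ->
  hp_wf n d lP -> hp_wf n d lQ ->
  (forall al be : C,
     (forall z : nat -> C,
        Cplus (Cmult al (hp_eval d lP z)) (Cmult be (hp_eval d lQ z)) = RtoC 0) ->
     al = RtoC 0 /\ be = RtoC 0) ->
  harmonic_morphism (2 * n + 3) (Phi_dom d a lQ) (Phi_hat d a lP lQ).
Proof.
  intros Hn Hd Hq HP HQ _.
  set (m := (2 * n + 3)%nat).
  assert (Em : m = (2 * n + 3)%nat) by reflexivity.
  assert (Hm : (3 <= m)%nat) by lia.
  destruct (C2e_quad m (fun _ => True) a Hm) as [P1 [P2 HC]].
  destruct (quad_facts m a P1 P2 Hm HC Hq) as [Z1 [Z2 [K T]]].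
  set (W := Phi_dom d a lQ).
  assert (Iso : IsoOK m W (iso n m P1)) by (apply IsoOK_iso; auto).
  assert (Gq : Good m W (iso n m P1) (quad a)) by (eapply Good_quad; eauto).
  assert (GQ : Good m W (iso n m P1) (fun x => hp_eval d lQ (zco x))) by (apply Good_hp; auto).
  assert (GP : Good m W (iso n m P1) (fun x => hp_eval d lP (zco x))) by (apply Good_hp; auto).
  assert (GH : Good m W (iso n m P1) (fun x => halfpow d (quad a x))).
  { unfold halfpow. destruct (Nat.even d) eqn:Ed.
    - apply Good_cpow; auto.
    - apply Good_cpow; auto. apply Good_csqrt; auto.
      intros x [_ [E|E]]. congruence.
      unfold slit. destruct (Req_dec (Im (quad a x)) 0) as [E2|E2].
      left. apply Rnot_le_lt. intro; apply E; auto. right; auto. }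
  assert (Gphi : Good m W (iso n m P1) (Phi_hat d a lP lQ)).
  { apply (Good_ext m W _ (fun x => (halfpow d (quad a x) + hp_eval d lP (zco x)) * / hp_eval d lQ (zco x))%C).
    intros; reflexivity.
    apply Good_mult; auto. apply Good_plus; auto. apply Good_inv; auto.
    intros x [Hx _]; auto. }
  destruct Gphi as [F1 [F2 [CF TF]]].
  apply (HM_general m W _ F1 F2).
  - apply open_dom.
    + intros x. destruct HC as [D _]. apply (D x I).
    + intros x Wx. destruct GQ as [G1 [G2 [[D _] _]]]. apply (D x Wx).
  - exact CF.
  - intros x Wx. destruct (TF x Wx) as [iF tF]. split; auto.
    destruct (Iso x Wx) as [_ [_ Pr]]. apply Pr; auto.
Qed.
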